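(* Let $h>s>0$, $w_1,w_2>0$ and $t\in[0,w_2)$. Let $P_1$ be the flat surface with boundary obtained from the rectangle $[0,w_1]\times[0,h]$ by gluing $(x,h)\sim(x,0)$ for $x\in[0,w_1]$ and $(0,y)\sim(w_1,y)$ for $y\in[s,h]$, the segments $\{0\}\times[0,s]$ and $\{w_1\}\times[0,s]$ being left unglued (they form the slit). Let $P_2$ be obtained from $[0,w_2]\times[0,h]$ by gluing $(x,h)\sim(x+t \bmod w_2,\,0)$ for $x\in[0,w_2]$ and $(0,y)\sim(w_2,y)$ for $y\in[s,h]$, with $\{0\}\times[0,s]$ and $\{w_2\}\times[0,s]$ unglued. Suppose $\mathrm{Area}(P_1)\ge\mathrm{Area}(P_2)$, and that for every cylinder $L_1$ on $P_1$ there is a cylinder $L_2$ on $P_2$ of the same slope with $\frac{\mathrm{Area}(L_1)}{\mathrm{Area}(P_1)}=\frac{\mathrm{Area}(L_2)}{\mathrm{Area}(P_2)}$. Then $P_2$ is isometric to $P_1$.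
   Context: A cylinder on $P_i$ is a maximal open subset of the interior of $P_i$ isometric (by a translation-structure-preserving isometry) to a Euclidean cylinder $(\mathbb{R}/c\mathbb{Z})\times(0,\eta)$; its slope is the direction of its core curves. *)

(* Defs.v *)
From HB Require Import structures.
From mathcomp Require Import all_boot all_order all_algebra.
From mathcomp Require Import boolp classical_sets reals.
Set Implicit Arguments. Unset Strict Implicit. Unset Printing Implicit Defensive.
Import Order.TTheory GRing.Theory Num.Theory.
Local Open Scope ring_scope.
Local Open Scope classical_set_scope.

(* Slit surface P(w,h,s,t): the rectangle [0,w]x[0,h] with (x,h) ~ (x+t mod w, 0)
   and (0,y) ~ (w,y) for y in [s,h], the two sides {0}x[0,s], {w}x[0,s] unglued.
   These identifications are exactly the translations by the lattice
   Lambda = Z(w,0) + Z(t,h) on the boundary of the fundamental domain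
   [0,w]x[0,h], so the interior of P is the flat torus R^2/Lambda minus the
   (closed) slit segment {0}x[0,s].  Points of the interior of P are
   represented by their lifts in R^2 (points that are [allowed]), two lifts
   representing the same point iff they are [equiv]. *)

Section SlitSurface.
Variable R : realType.
Implicit Types (w h s t : R) (p q : R * R).

Definition lattice w h t p : Prop :=
  exists m n : int, p.1 = m%:~R * w + n%:~R * t /\ p.2 = n%:~R * h.

Definition equiv w h t p q : Prop := lattice w h t (p.1 - q.1, p.2 - q.2).

Definition slit s p : Prop := p.1 = 0 /\ 0 <= p.2 <= s.

Definition allowed w h s t p : Prop :=
  ~ (exists l, lattice w h t l /\ slit s (p.1 - l.1, p.2 - l.2)).

Definition edist p q : R := Num.sqrt ((p.1 - q.1) ^+ 2 + (p.2 - q.2) ^+ 2).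

Definition seg_in (A : set (R * R)) p q : Prop :=
  forall u : R, 0 <= u <= 1 -> A (p.1 + u * (q.1 - p.1), p.2 + u * (q.2 - p.2)).

Fixpoint poly_in (A : set (R * R)) p (ps : seq (R * R)) : Prop :=
  if ps is q :: ps' then seg_in A p q /\ poly_in A q ps' else True.

Fixpoint poly_len p (ps : seq (R * R)) : R :=
  if ps is q :: ps' then edist p q + poly_len q ps' else 0.

Definition pdist w h s t x y : R :=
  inf [set len | exists (ps : seq (R * R)) (l : R * R),
         [/\ poly_in (allowed w h s t) x ps, lattice w h t l,
             last x ps = (y.1 + l.1, y.2 + l.2) & len = poly_len x ps]].

(* P(w2,h2,s2,t2) is isometric to P(w1,h1,s1,t1): a bijection between the
   interiors preserving the intrinsic distance (it then extends uniquely to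
   an isometry of the surfaces with boundary, their metric completions). *)
Definition isometric w2 h2 s2 t2 w1 h1 s1 t1 : Prop :=
  exists f : R * R -> R * R,
  [/\ forall x, allowed w2 h2 s2 t2 x -> allowed w1 h1 s1 t1 (f x),
      forall x y, allowed w2 h2 s2 t2 x -> allowed w2 h2 s2 t2 y ->
        (equiv w1 h1 t1 (f x) (f y) <-> equiv w2 h2 t2 x y),
      forall z, allowed w1 h1 s1 t1 z ->
        exists x, allowed w2 h2 s2 t2 x /\ equiv w1 h1 t1 (f x) z
    & forall x y, allowed w2 h2 s2 t2 x -> allowed w2 h2 s2 t2 y ->
        pdist w1 h1 s1 t1 (f x) (f y) = pdist w2 h2 s2 t2 x y].

Definition strip (p v : R * R) (eta : R) : set (R * R) :=
  [set z | exists a b : R, 0 < b < eta /\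
     z = (p.1 + a * v.1 - b * v.2, p.2 + a * v.2 + b * v.1)].

(* C (a set of lifts, i.e. a subset of the interior) is the image of a
   translation-structure-preserving isometric embedding of the Euclidean
   cylinder (R / cZ) x (0,eta) whose core curves have direction v (unit):
   the embedding is (a,b) |-> [p + a v + b v^perp]. *)
Definition cyl_embedded w h s t (C : set (R * R)) (v : R * R) (c eta : R) : Prop :=
  v.1 ^+ 2 + v.2 ^+ 2 = 1 /\ 0 < c /\ 0 < eta /\
  exists p : R * R,
  [/\ strip p v eta `<=` allowed w h s t,
      (forall x y, strip p v eta x -> strip p v eta y ->
         (equiv w h t x y <-> exists k : int, x.1 - y.1 = k%:~R * c * v.1
                                           /\ x.2 - y.2 = k%:~R * c * v.2))
    & C = [set z | exists x, strip p v eta x /\ equiv w h t z x]].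

(* a cylinder: a maximal such subset; its slope is the direction v of the core
   curves, its area is c * eta *)
Definition cylinder w h s t (C : set (R * R)) (v : R * R) (c eta : R) : Prop :=
  cyl_embedded w h s t C v c eta /\
  forall C' v' c' eta', cyl_embedded w h s t C' v' c' eta' -> C `<=` C' -> C' = C.

Definition same_slope (v1 v2 : R * R) : Prop := v1.1 * v2.2 - v1.2 * v2.1 = 0.

(* area of P(w,h,s,t) (the slit has measure zero) *)
Definition area_surf w h : R := w * h.

End SlitSurface.

(* Main.v *)
Require Import Defs.
From HB Require Import structures.
From mathcomp Require Import all_boot all_order all_algebra.
From mathcomp Require Import boolp classical_sets reals.
From mathcomp Require Import zify ring lra.
Import Order.TTheory GRing.Theory Num.Theory.
Local Open Scope ring_scope.
Local Open Scope classical_set_scope.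

Section Aux.
Variable R : realType.
Implicit Types (v p x y z : R * R).

Definition pr (v z : R * R) : R := - z.1 * v.2 + z.2 * v.1.

Lemma ge1R (k : int) : (1 <= k) -> (1:R) <= k%:~R.
Proof. by move=> H; rewrite -[1]/((1:int)%:~R) ler_int. Qed.
Lemma ge2R (k : int) : (2 <= k) -> (2:R) <= k%:~R.
Proof. by move=> H; rewrite -[2]/((2:int)%:~R) ler_int. Qed.
Lemma lem1R (k : int) : (k <= -1) -> k%:~R <= (-1:R).
Proof. by move=> H; rewrite -[-1]/((-1:int)%:~R) ler_int. Qed.
Lemma lem2R (k : int) : (k <= -2) -> k%:~R <= (-2:R).
Proof. by move=> H; rewrite -[-2]/((-2:int)%:~R) ler_int. Qed.
Lemma int0R (k : int) : k = 0 -> (k%:~R : R) = 0.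
Proof. by move=> ->. Qed.

Lemma int_cases (k : int) : (1 <= k) \/ k = 0 \/ (k <= -1).
Proof. lia. Qed.

Lemma strip_iff v p eta x : v.1 ^+ 2 + v.2 ^+ 2 = 1 ->
  strip p v eta x <-> 0 < pr v x - pr v p < eta.
Proof.
move=> vu; split.
  move=> [a [b [hb ->]]].
  have -> : pr v (p.1 + a * v.1 - b * v.2, p.2 + a * v.2 + b * v.1) - pr v p
          = b * (v.1 ^+ 2 + v.2 ^+ 2) by rewrite /pr /=; ring.
  by rewrite vu mulr1.
move=> hb.
exists ((x.1 - p.1) * v.1 + (x.2 - p.2) * v.2), (pr v x - pr v p); split=> //.
case: x hb => x1 x2 /= _; congr (_, _); apply/eqP; rewrite -subr_eq0 /pr /=.
  have -> : x1 - (p.1 + ((x1 - p.1) * v.1 + (x2 - p.2) * v.2) * v.1 -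
     (- x1 * v.2 + x2 * v.1 - (- p.1 * v.2 + p.2 * v.1)) * v.2)
     = (x1 - p.1) * (1 - (v.1 ^+ 2 + v.2 ^+ 2)) by ring.
  by rewrite vu subrr mulr0.
have -> : x2 - (p.2 + ((x1 - p.1) * v.1 + (x2 - p.2) * v.2) * v.2 +
   (- x1 * v.2 + x2 * v.1 - (- p.1 * v.2 + p.2 * v.1)) * v.1)
   = (x2 - p.2) * (1 - (v.1 ^+ 2 + v.2 ^+ 2)) by ring.
by rewrite vu subrr mulr0.
Qed.

Lemma pr_sub v x y : pr v (x.1 - y.1, x.2 - y.2) = pr v x - pr v y.
Proof. rewrite /pr /=; ring. Qed.

Lemma lat_sub (w h t : R) (a b : R * R) : lattice w h t a -> lattice w h t b ->
  lattice w h t (a.1 - b.1, a.2 - b.2).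
Proof.
move=> [m1 [n1 [e1 e2]]] [m2 [n2 [f1 f2]]]; exists (m1 - m2), (n1 - n2).
by rewrite /= !intrB e1 e2 f1 f2; split; ring.
Qed.

Lemma lat0 (w h t : R) : lattice w h t (0, 0).
Proof. by exists 0, 0; rewrite /= !mulr0z !mul0r addr0. Qed.

End Aux.
Arguments pr {R}.
Arguments strip_iff {R}.
Arguments pr_sub {R}.
Arguments lat_sub {R}.
Arguments lat0 {R}.
Arguments ge1R {R}. Arguments ge2R {R}. Arguments lem1R {R}. Arguments lem2R {R}.

Section P2.
Variable R : realType.

Lemma int_cancel (a : int) (r : R) : r != 0 -> a%:~R * r = 0 -> a = 0.
Proof. by move=> rn /eqP; rewrite mulf_eq0 (negbTE rn) orbF intr_eq0 => /eqP. Qed.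

Lemma kg1 (k g : int) : 0 <= g -> k * g = 1 -> g = 1.
Proof. move=> H1 H2. have : (k <= 0 \/ 1 <= k) by lia. case=> H; nia. Qed.

Lemma p2_bound (w2 h s t : R) (L : set (R * R)) (v : R * R) (c eta : R) :
  0 < w2 -> 0 < h -> 0 <= s -> cyl_embedded w2 h s t L v c eta ->
  exists m N : int, c * v.1 = m%:~R * w2 + N%:~R * t /\ c * v.2 = N%:~R * h /\
    c * eta + s * `|c * v.1| <= w2 * h.
Proof.
move=> w0 h0 s0 [vu [c0 [e0 [p [Hsub Hiff _]]]]].
have Hs x : strip p v eta x <-> 0 < pr v x - pr v p < eta := strip_iff v p eta x vu.
have cne : c != 0 by rewrite gt_eqF.
pose b0 := eta / 2.
pose x0 := (p.1 + 0 * v.1 - b0 * v.2, p.2 + 0 * v.2 + b0 * v.1).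
have x0s : strip p v eta x0 by exists 0, b0; split => //; rewrite /b0; lra.
pose x1 := (p.1 + c * v.1 - b0 * v.2, p.2 + c * v.2 + b0 * v.1).
have x1s : strip p v eta x1 by exists c, b0; split => //; rewrite /b0; lra.
have [m [N [e1 e2]]] : lattice w2 h t (x1.1 - x0.1, x1.2 - x0.2).
  apply/(Hiff x1 x0 x1s x0s); exists 1; rewrite /x1 /x0 /= !mul1r; split; ring.
have hX : c * v.1 = m%:~R * w2 + N%:~R * t by rewrite -e1 /x1 /x0 /=; ring.
have hY : c * v.2 = N%:~R * h by rewrite -e2 /x1 /x0 /=; ring.
exists m, N; split => //; split => //.
have Kpr (m' n' : int) : c * pr v (m'%:~R * w2 + n'%:~R * t, n'%:~R * h)
    = h * w2 * (m * n' - N * m')%:~R.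
  have -> : c * pr v (m'%:~R * w2 + n'%:~R * t, n'%:~R * h)
     = - (m'%:~R * w2 + n'%:~R * t) * (c * v.2) + n'%:~R * h * (c * v.1)
    by rewrite /pr /=; ring.
  rewrite hX hY intrB !intrM; ring.
case: (Bezoutz m N) => a [b Hab].
have g1 : gcdz m N = 1.
  have /dvdzP [m0 Hm0] := dvdz_gcdl m N.
  have /dvdzP [N0 HN0] := dvdz_gcdr m N.
  move: Hm0 HN0; set g := gcdz m N => Hm0 HN0.
  pose ls := (m0%:~R * w2 + N0%:~R * t, N0%:~R * h).
  have prls : pr v ls = 0.
    apply: (mulfI cne); rewrite mulr0 Kpr Hm0 HN0.
    have -> : m0 * g * N0 - N0 * g * m0 = 0 by ring.
    by rewrite mulr0z mulr0.
  pose xs := (x0.1 + ls.1, x0.2 + ls.2).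
  have xss : strip p v eta xs.
    apply/Hs; have -> : pr v xs = pr v x0 + pr v ls by rewrite /pr /=; ring.
    by rewrite prls addr0; apply/Hs.
  have [k [k1 k2]] : exists k : int, xs.1 - x0.1 = k%:~R * c * v.1 /\
                                     xs.2 - x0.2 = k%:~R * c * v.2.
    apply/(Hiff xs x0 xss x0s); exists m0, N0; rewrite /xs /=; split; ring.
  have k1' : m0%:~R * w2 + N0%:~R * t = k%:~R * (m%:~R * w2 + N%:~R * t).
    by rewrite -hX mulrA -k1 /xs /=; ring.
  have k2' : N0%:~R * h = k%:~R * (N%:~R * h).
    by rewrite -hY mulrA -k2 /xs /=; ring.
  have kg : k * g = 1.
    case: (eqVneq N0 0) => HN.
    - have HN' : N = 0 by rewrite HN0 HN mul0r.
      have m0n : m0 != 0.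
        apply/eqP => Hm; move: hX hY; rewrite Hm0 Hm HN' => hX0 hY0.
        have hX' : c * v.1 = 0 by rewrite hX0; ring.
        have hY' : c * v.2 = 0 by rewrite hY0; ring.
        have : (c * v.1) ^+ 2 + (c * v.2) ^+ 2 = c ^+ 2 by rewrite !exprMn -mulrDr vu mulr1.
        rewrite hX' hY' expr0n /= addr0 => /esym /eqP; rewrite expf_eq0 /= => /eqP c00.
        by move: cne; rewrite c00 eqxx.
      move: k1'; rewrite Hm0 HN HN' mulr0z !mul0r !addr0 => k1'.
      have : (m0 - k * (m0 * g))%:~R * w2 = 0.
        by rewrite intrB intrM mulrBl k1' intrM; ring.
      move/(@int_cancel _ w2 (lt0r_neq0 w0)) => H.
      have : m0 * (1 - k * g) = 0 by rewrite -H; ring.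
      by move/eqP; rewrite mulf_eq0 (negbTE m0n) /= subr_eq0 => /eqP <-.
    - move: k2'; rewrite HN0 => k2'.
      have : (N0 - k * (N0 * g))%:~R * h = 0.
        by rewrite intrB intrM mulrBl k2' intrM; ring.
      move/(@int_cancel _ h (lt0r_neq0 h0)) => H.
      have : N0 * (1 - k * g) = 0 by rewrite -H; ring.
      by move/eqP; rewrite mulf_eq0 (negbTE HN) /= subr_eq0 => /eqP <-.
  exact: (kg1 k).
rewrite g1 in Hab.
pose lG (j : int) := ((j * - b)%:~R * w2 + (j * a)%:~R * t, (j * a)%:~R * h).
pose d := w2 * h / c.
have d0 : 0 < d by rewrite /d divr_gt0 // mulr_gt0.
have cd : c * d = w2 * h by rewrite /d; field.
have prG j : pr v (lG j) = j%:~R * d.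
  apply: (mulfI cne); rewrite Kpr.
  have -> : m * (j * a) - N * (j * - b) = j * (a * m + b * N) by ring.
  rewrite Hab mulr1 /d; field; exact: cne.
pose al := pr v p.
have key (j : int) y : 0 <= y <= s -> ~ (0 < j%:~R * d + y * v.1 - al < eta).
  move=> hy hin.
  pose z := (0 + (lG j).1, y + (lG j).2).
  have : strip p v eta z.
    apply/Hs; have -> : pr v z = pr v (lG j) + y * v.1 by rewrite /pr /=; ring.
    by rewrite prG.
  move/Hsub; apply; exists (lG j); split.
    by exists (j * - b), (j * a).
  by rewrite /slit /z /= !addrK.
suff : eta + s * `|v.1| <= d.
  move=> H; rewrite normrM (gtr0_norm c0); nra.
have [v1p|v1n] := lerP 0 v.1.
- rewrite (ger0_norm v1p).
  set F := Num.floor ((al - s * v.1) / d).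
  have f1 : F%:~R <= (al - s * v.1) / d := floor_le_tmp _.
  have f2 : (al - s * v.1) / d < (F + 1)%:~R := lt_succ_floor _.
  have qd : (al - s * v.1) / d * d = al - s * v.1 by rewrite divfK // gt_eqF.
  rewrite intrD in f2.
  have h1 : F%:~R * d <= al - s * v.1 by nra.
  have h2 : al - s * v.1 < (F%:~R + 1) * d by nra.
  have kF := key (F + 1); rewrite intrD in kF.
  suff : al + eta <= (F%:~R + 1) * d by nra.
  rewrite leNgt; apply/negP => H.
  have [H1|H1] := ltrP al ((F%:~R + 1) * d).
    by apply: (kF 0); [lra | lra].
  have [H2|H2] := ltrP ((F%:~R + 1) * d + s * v.1) (al + eta).
    by apply: (kF s); [lra | lra].
  have v1q : 0 < v.1.
    rewrite lt0r; apply/andP; split => //; apply/eqP => v10.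
    by move: H1 h2; rewrite v10 mulr0; lra.
  pose y := (al + eta / 2 - (F%:~R + 1) * d) / v.1.
  have yv : y * v.1 = al + eta / 2 - (F%:~R + 1) * d by rewrite /y divfK // gt_eqF.
  apply: (kF y).
    have y0 : 0 <= y by rewrite /y divr_ge0 //; lra.
    apply/andP; split; [exact y0| nra].
  by rewrite yv; lra.
- rewrite (ltr0_norm v1n).
  set F := Num.floor (al / d).
  have f1 : F%:~R <= al / d := floor_le_tmp _.
  have f2 : al / d < (F + 1)%:~R := lt_succ_floor _.
  have qd : al / d * d = al by rewrite divfK // gt_eqF.
  rewrite intrD in f2.
  have h1 : F%:~R * d <= al by nra.
  have h2 : al < (F%:~R + 1) * d by nra.
  have kF := key (F + 1); rewrite intrD in kF.
  suff : al + eta <= (F%:~R + 1) * d + s * v.1 by nra.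
  rewrite leNgt; apply/negP => H.
  have [H1|H1] := ltrP al ((F%:~R + 1) * d + s * v.1).
    by apply: (kF s); [lra | lra].
  have [H2|H2] := ltrP ((F%:~R + 1) * d) (al + eta).
    by apply: (kF 0); [lra | lra].
  pose y := (al + eta / 2 - (F%:~R + 1) * d) / v.1.
  have yv : y * v.1 = al + eta / 2 - (F%:~R + 1) * d by rewrite /y divfK // lt_eqF.
  apply: (kF y).
    apply/andP; split; nra.
  by rewrite yv; lra.
Qed.

End P2.
Arguments p2_bound {R w2 h s t L v c eta}.

Section P1.
Variable R : realType.
Variables (W h s : R).
Hypotheses (s0 : 0 < s) (sh : s < h) (W0 : 0 < W).

Definition cP1 : R := Num.sqrt (W ^+ 2 + h ^+ 2).
Definition vP1 : R * R := (W / cP1, h / cP1).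
Definition pP1 : R * R := (0, s).
Definition etaP1 : R := (W * h - s * W) / cP1.
Definition CP1 : set (R * R) :=
  [set z | exists x, strip pP1 vP1 etaP1 x /\ Defs.equiv W h 0 z x].
Definition psi (z : R * R) : R := - z.1 * h + z.2 * W.

Lemma h0 : 0 < h. Proof. exact: lt_trans sh. Qed.
Lemma c0 : 0 < cP1.
Proof. by rewrite /cP1 sqrtr_gt0; have := h0; nra. Qed.
Lemma cne : cP1 != 0. Proof. exact: lt0r_neq0 c0. Qed.
Lemma c2E : cP1 ^+ 2 = W ^+ 2 + h ^+ 2.
Proof. by rewrite /cP1 sqr_sqrtr // addr_ge0 // sqr_ge0. Qed.
Lemma vu : vP1.1 ^+ 2 + vP1.2 ^+ 2 = 1.
Proof. by rewrite /vP1 /= !expr_div_n -mulrDl -c2E divff // expf_neq0 // cne. Qed.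

Lemma prE z : pr vP1 z = psi z / cP1.
Proof. rewrite /pr /psi /vP1 /=; ring. Qed.

Lemma sP1 x : strip pP1 vP1 etaP1 x <-> s * W < psi x < W * h.
Proof.
rewrite (strip_iff _ _ _ _ vu) !prE.
have -> : psi x / cP1 - psi pP1 / cP1 = (psi x - s * W) / cP1 by rewrite /psi /=; ring.
rewrite /etaP1 pmulr_lgt0 ?invr_gt0 ?c0 // ltr_pM2r ?invr_gt0 ?c0 //.
split => /andP [H1 H2]; apply/andP; split; lra.
Qed.

Lemma psi_lat l : lattice W h 0 l -> exists k : int, psi l = k%:~R * (W * h).
Proof.
move=> [m [n [e1 e2]]]; exists (n - m); rewrite /psi e1 e2 intrB; ring.
Qed.

Lemma p1_emb : cyl_embedded W h s 0 CP1 vP1 cP1 etaP1.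
Proof.
split; first exact: vu. split; first exact: c0.
have hWs : 0 < W * (h - s) by apply: mulr_gt0 => //; rewrite subr_gt0.
split; first by rewrite /etaP1; apply: divr_gt0; [move: hWs; rewrite mulrBr (mulrC W s) | exact: c0].
exists pP1; split => //.
- move=> x /sP1 /andP [H1 H2] [l [hl [sl1 /andP [sl2 sl3]]]].
  have [k hk] := psi_lat _ hl.
  move: sl1 sl2 sl3 => /= sl1 sl2 sl3.
  have e : x.1 = l.1 by lra.
  have hpx : psi x = k%:~R * (W * h) + (x.2 - l.2) * W by rewrite -hk /psi e; ring.
  have hW : 0 < W * h := mulr_gt0 W0 h0.
  have y0 : 0 <= (x.2 - l.2) * W by apply: mulr_ge0 => //; exact: ltW.
  have ys : (x.2 - l.2) * W <= s * W by rewrite ler_pM2r.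
  case: (int_cases k) => [/(ge1R (R:=R))|[/(@int0R R)|/(lem1R (R:=R))]] hk'.
  + have : (k%:~R - 1) * (W * h) >= 0 by apply: mulr_ge0; lra.
    lra.
  + by move: hpx; rewrite hk' mul0r add0r => hpx; lra.
  + have : (-1 - k%:~R) * (W * h) >= 0 by apply: mulr_ge0; lra.
    lra.
- have cW : cP1 * (W / cP1) = W by rewrite mulrC divfK // cne.
  have ch : cP1 * (h / cP1) = h by rewrite mulrC divfK // cne.
  have hW : 0 < W * h := mulr_gt0 W0 h0.
  move=> x y /sP1 /andP [x1 x2] /sP1 /andP [y1 y2]; split.
  + move=> [m [n [e1 e2]]].
    have hd : psi x - psi y = (n - m)%:~R * (W * h).
      have -> : psi x - psi y = - ((x.1 - y.1, x.2 - y.2).1) * h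
                               + ((x.1 - y.1, x.2 - y.2).2) * W by rewrite /psi /=; ring.
      rewrite e1 e2 intrB; ring.
    have nm : n = m.
      have [k kE] : exists k, n - m = k by eexists.
      rewrite kE in hd.
      suff : k = 0 by lia.
      case: (int_cases k) => [|[|]] hk; last 2 first.
      * lia.
      * have hk' := @lem1R R _ hk.
        have : (-1 - k%:~R) * (W * h) >= 0 by apply: mulr_ge0; lra.
        have : 0 <= s * W by apply: mulr_ge0; apply: ltW.
        move=> ? ?; exfalso; lra.
      * have hk' := @ge1R R _ hk.
        have : (k%:~R - 1) * (W * h) >= 0 by apply: mulr_ge0; lra.
        have : 0 <= s * W by apply: mulr_ge0; apply: ltW.
        move=> ? ?; exfalso; lra.
    exists m; move: e1 e2 => /= -> ->; rewrite nm -!mulrA cW ch; split; ring.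
  + move=> [k [e1 e2]]; exists k, k; rewrite /= e1 e2 -!mulrA cW ch; split; ring.
Qed.

Lemma p1_max : forall C' v' c' eta', cyl_embedded W h s 0 C' v' c' eta' ->
  CP1 `<=` C' -> C' = CP1.
Proof.
move=> C' v' c' eta' [v'u [c'0 [e'0 [p' [Hsub' Hiff' HC']]]]] HCC.
have Hs' x := strip_iff v' p' eta' x v'u.
have Hs x := strip_iff vP1 pP1 etaP1 x vu.
have e0 : 0 < etaP1.
  rewrite /etaP1; apply: divr_gt0; last exact: c0.
  have : 0 < W * (h - s) by apply: mulr_gt0 => //; rewrite subr_gt0.
  by rewrite mulrBr (mulrC W s).
pose d := pr vP1 v'.
case: (eqVneq d 0) => Hd; last first.
  exfalso.
  pose lam := (pr vP1 pP1 + etaP1 / 2) / d.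
  pose z := (lam * v'.1, lam * v'.2).
  have zs : strip pP1 vP1 etaP1 z.
    apply/Hs; have -> : pr vP1 z = lam * d by rewrite /d /pr /z /=; ring.
    rewrite /lam divfK //; lra.
  have : C' z.
    apply: HCC; exists z; split => //.
    by rewrite /Defs.equiv !subrr; exact: lat0.
  rewrite HC' => -[x [xs [m [n [e1 e2]]]]].
  pose r := (0 - (z.1 - x.1), 0 - (z.2 - x.2)).
  have : strip p' v' eta' r.
    apply/Hs'; have -> : pr v' r = pr v' x by rewrite /pr /r /z /=; ring.
    exact/Hs'.
  move/Hsub'; apply; exists r; split.
    apply: (lat_sub W h 0 (0, 0) (z.1 - x.1, z.2 - x.2)); first exact: lat0.
    by exists m, n.
  rewrite /slit !subrr; split => //; apply/andP; split; [exact: lexx | exact: ltW].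
pose sg := vP1.1 * v'.1 + vP1.2 * v'.2.
have E1 : v'.1 = sg * vP1.1.
  apply/eqP; rewrite -subr_eq0.
  have -> : v'.1 - sg * vP1.1 = v'.1 * (1 - (vP1.1 ^+ 2 + vP1.2 ^+ 2)) - vP1.2 * d
    by rewrite /d /pr /sg; ring.
  by rewrite vu subrr mulr0 Hd mulr0 subr0.
have E2 : v'.2 = sg * vP1.2.
  apply/eqP; rewrite -subr_eq0.
  have -> : v'.2 - sg * vP1.2 = v'.2 * (1 - (vP1.1 ^+ 2 + vP1.2 ^+ 2)) + vP1.1 * d
    by rewrite /d /pr /sg; ring.
  by rewrite vu subrr mulr0 Hd mulr0 addr0.
have prp z : pr v' z = sg * pr vP1 z by rewrite /pr E1 E2; ring.
rewrite HC' eqEsubset; split; last by rewrite -HC'.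
move=> z [x [xs [m [n [e1 e2]]]]].
have hW : 0 < W * h := mulr_gt0 W0 h0.
set K := Num.floor (psi z / (W * h)).
have f1 : K%:~R <= psi z / (W * h) := floor_le_tmp _.
have f2 : psi z / (W * h) < (K + 1)%:~R := lt_succ_floor _.
rewrite intrD in f2.
have qd : psi z / (W * h) * (W * h) = psi z by rewrite divfK // lt0r_neq0.
have u0 : K%:~R * (W * h) <= psi z by nra.
have u1 : psi z < (K%:~R + 1) * (W * h) by nra.
pose u := psi z - K%:~R * (W * h).
have [hu|hu] := ltrP (s * W) u.
  exists (z.1, z.2 - K%:~R * h); split.
    apply/sP1; have -> : psi (z.1, z.2 - K%:~R * h) = u by rewrite /u /psi /=; ring.
    apply/andP; split => //; rewrite /u; lra.
  by exists 0, K; rewrite /=; split; ring.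
exfalso.
pose y := u / W.
have yW : y * W = u by rewrite /y divfK // lt0r_neq0.
pose r := (0 - (z.1 - x.1), y + K%:~R * h - (z.2 - x.2)).
have : strip p' v' eta' r.
  apply/Hs'; suff -> : pr v' r = pr v' x by exact/Hs'.
  rewrite !prp; congr (_ * _); rewrite !prE; congr (_ / _).
  apply/eqP; rewrite -subr_eq0.
  have -> : psi r - psi x = y * W - psi z + K%:~R * (W * h) by rewrite /psi /r /=; ring.
  by rewrite yW /u; apply/eqP; ring.
move/Hsub'; apply; exists (0 - (z.1 - x.1), K%:~R * h - (z.2 - x.2)); split.
  apply: (lat_sub W h 0 (0, K%:~R * h) (z.1 - x.1, z.2 - x.2)).
    by exists 0, K; rewrite /=; split; ring.
  by exists m, n.
rewrite /slit /r /=; split; first by ring.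
have -> : y + K%:~R * h - (z.2 - x.2) - (K%:~R * h - (z.2 - x.2)) = y by ring.
have ypos : 0 <= u by rewrite /u; lra.
apply/andP; split; first by rewrite /y divr_ge0 // ltW.
by rewrite -(ler_pM2r W0) yW.
Qed.

Lemma p1_cyl : cylinder W h s 0 CP1 vP1 cP1 etaP1.
Proof. split; first exact: p1_emb. exact: p1_max. Qed.

End P1.
Arguments p1_cyl {R W h s}.
Arguments c0 {R W h s}.
Arguments cP1 {R}.
Arguments etaP1 {R}.
Arguments vP1 {R}.

Lemma iso_refl (R : realType) (w h s t : R) : isometric w h s t w h s t.
Proof.
exists id; split => //.
by move=> z Hz; exists z; split => //; rewrite /Defs.equiv !subrr; exact: lat0.
Qed.

Theorem lemma8p1 (R : realType) (h s w1 w2 t : R) :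
  0 < s -> s < h -> 0 < w1 -> 0 < w2 -> 0 <= t -> t < w2 ->
  area_surf w1 h >= area_surf w2 h ->
  (forall (L1 : set (R * R)) (v1 : R * R) (c1 eta1 : R),
     cylinder w1 h s 0 L1 v1 c1 eta1 ->
     exists (L2 : set (R * R)) (v2 : R * R) (c2 eta2 : R),
       cylinder w2 h s t L2 v2 c2 eta2 /\ same_slope v1 v2 /\
       (c1 * eta1) / area_surf w1 h = (c2 * eta2) / area_surf w2 h) ->
  isometric w2 h s t w1 h s 0.
Proof.
move=> s0 sh W0 w20 t0 tw Ha Hyp.
have h0 : 0 < h := lt_trans s0 sh.
have [L2 [v2 [c2 [eta2 [[Hemb _] [Hsl Hrat]]]]]] := Hyp _ _ _ _ (p1_cyl s0 sh W0).
have [m [N [hX [hY hb]]]] := p2_bound w20 h0 (ltW s0) Hemb.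
move: Hemb => [v2u [c20 [e20 _]]].
have cc := c0 (W:=w1) s0 sh.
have cne' : cP1 w1 h != 0 by exact: lt0r_neq0.
have ce : cP1 w1 h * etaP1 w1 h s = w1 * h - s * w1.
  by rewrite /etaP1 mulrC divfK.
have sl : w1 * (c2 * v2.2) - h * (c2 * v2.1) = 0.
  have := congr1 (fun r => r * (cP1 w1 h * c2)) Hsl; rewrite mul0r /same_slope /vP1 /=.
  have -> : (w1 / cP1 w1 h * v2.2 - h / cP1 w1 h * v2.1) * (cP1 w1 h * c2)
     = (w1 * (c2 * v2.2) - h * (c2 * v2.1)) * (cP1 w1 h / cP1 w1 h) by ring.
  by rewrite divff // mulr1.
have hXN : c2 * v2.1 = N%:~R * w1.
  have : (c2 * v2.1 - N%:~R * w1) * h = 0.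
    by rewrite -[RHS]oppr0 -sl hY; ring.
  by move/eqP; rewrite mulf_eq0 (negbTE (lt0r_neq0 h0)) orbF subr_eq0 => /eqP.
have E2 : c2 * eta2 = w2 * (h - s).
  have E : c2 * eta2 = (c2 * eta2) / area_surf w2 h * (w2 * h).
    by rewrite /area_surf divfK // mulf_neq0 // lt0r_neq0.
  rewrite E -Hrat ce /area_surf; field.
  by rewrite !lt0r_neq0.
have w21 : w2 <= w1 by move: Ha; rewrite /area_surf ler_pM2r.
rewrite hXN in hb hX.
have hb' : `|N%:~R * w1| <= w2.
  have : s * `|N%:~R * w1| <= s * w2.
    move: hb; rewrite E2 => hb; lra.
  by rewrite ler_pM2l.
suff [-> ->] : w2 = w1 /\ t = 0 by exact: iso_refl.
clear Hyp Hrat Hsl sl ce E2 hb Ha L2 cc cne' e20.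
case: (int_cases N) => [hN|[hN|hN]].
- have hN' := @ge1R R _ hN.
  have nw : 0 <= N%:~R * w1 by apply: mulr_ge0; lra.
  rewrite (ger0_norm nw) in hb'.
  have N1 : N = 1.
    have : N = 1 \/ 2 <= N by lia.
    case=> // /(@ge2R R _) H2; exfalso.
    have : 0 <= (N%:~R - 2) * w1 by apply: mulr_ge0; lra.
    lra.
  have hNr : (N%:~R : R) = 1 by rewrite N1.
  move: hX hb'; rewrite hNr !mul1r => hX hb'.
  have ew : w2 = w1 by lra.
  split => //.
  rewrite ew in hX tw.
  case: (int_cases m) => [hm|[hm|hm]].
  + have := @ge1R R _ hm => hm'.
    have : 0 <= (m%:~R - 1) * w1 by apply: mulr_ge0; lra.
    lra.
  + move: hX; rewrite (@int0R R _ hm) mul0r add0r => hX; lra.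
  + have := @lem1R R _ hm => hm'.
    have : 0 <= (-1 - m%:~R) * w1 by apply: mulr_ge0; lra.
    lra.
- exfalso.
  move: hXN hY; rewrite hN => hX0 hY0.
  have hX' : c2 * v2.1 = 0 by rewrite hX0; ring.
  have hY' : c2 * v2.2 = 0 by rewrite hY0; ring.
  have : (c2 * v2.1) ^+ 2 + (c2 * v2.2) ^+ 2 = c2 ^+ 2 by rewrite !exprMn -mulrDr v2u mulr1.
  rewrite hX' hY' expr0n /= addr0 => /esym /eqP; rewrite expf_eq0 /= => /eqP c00.
  by move: c20; rewrite c00 ltxx.
- have hN' := @lem1R R _ hN.
  have nw : N%:~R * w1 <= 0.
    have : 0 <= (- N%:~R) * w1 by apply: mulr_ge0; lra.
    lra.
  rewrite (ler0_norm nw) in hb'.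
  have N1 : N = -1.
    have : N = -1 \/ N <= -2 by lia.
    case=> // /(@lem2R R _) H2; exfalso.
    have : 0 <= (-2 - N%:~R) * w1 by apply: mulr_ge0; lra.
    lra.
  have hNr : (N%:~R : R) = -1 by rewrite N1.
  move: hX hb'; rewrite hNr !mulN1r => hX hb'.
  have ew : w2 = w1 by lra.
  split => //.
  rewrite ew in hX tw.
  case: (int_cases m) => [hm|[hm|hm]].
  + have := @ge1R R _ hm => hm'.
    have : 0 <= (m%:~R - 1) * w1 by apply: mulr_ge0; lra.
    lra.
  + move: hX; rewrite (@int0R R _ hm) mul0r add0r => hX; lra.
  + have := @lem1R R _ hm => hm'.
    have : 0 <= (-1 - m%:~R) * w1 by apply: mulr_ge0; lra.
    lra.
Qed.
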